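(* Let $j\in\mathbb{N}$, $r\in\mathbb{N}_0$, and let $n=p_1^{a_1}\cdots p_t^{a_t}$ with $t\in\mathbb{N}$, distinct primes $p_1,\dots,p_t$ and $a_1,\dots,a_t\in\mathbb{N}$. Then \[\frac{c_j^{(r)}(n)}{d_{j+r}(n)}=\sum_{i=0}^{j}(-1)^i\binom{j}{i}\frac{\binom{j+r-1}{i}^t}{\prod_{k=1}^t\binom{a_k+j+r-1}{i}}={}_{t+1}F_t\big(\underbrace{1-j-r,\dots,1-j-r}_{t},\,-j;\ 1-a_1-j-r,\dots,1-a_t-j-r;\ 1\big).\] Moreover, if $r\ge 1$, \[\frac{c_j^{(r)}(n)}{d_r(n)}=\sum_{i=0}^{j}(-1)^{j-i}\binom{j}{i}\frac{\prod_{k=1}^t\binom{a_k+i+r-1}{i}}{\binom{i+r-1}{i}^t}=(-1)^j\,{}_{t+1}F_t\big(a_1+r,\dots,a_t+r,\,-j;\ \underbrace{r,\dots,r}_{t};\ 1\big).\]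
   Context: For $j,n\in\mathbb{N}$, $d_j(n)$ is the number of ordered $j$-tuples of positive integers with product $n$, and $c_j(n)$ is the number of ordered $j$-tuples of integers each $\ge 2$ with product $n$. The associated divisor functions are defined by $c_j^{(0)}=c_j$ and $c_j^{(r)}(n)=\sum_{m\mid n}c_j^{(r-1)}(m)$ for $r,n\in\mathbb{N}$. The generalised hypergeometric series is ${}_{p}F_q(\alpha_1,\dots,\alpha_p;\beta_1,\dots,\beta_q;z)=\sum_{i=0}^\infty\frac{\alpha_1^{\overline i}\cdots\alpha_p^{\overline i}z^i}{\beta_1^{\overline i}\cdots\beta_q^{\overline i}\,i!}$ with rising factorial $x^{\overline i}=\prod_{l=0}^{i-1}(x+l)$, $x^{\overline 0}=1$; the series above terminate after the term $i=j$ because $(-j)^{\overline i}=0$ for $i>j$. *)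

(* Defs.v *)
From HB Require Import structures.
From mathcomp Require Import all_boot all_order all_algebra.
Set Implicit Arguments. Unset Strict Implicit. Unset Printing Implicit Defensive.
Import Order.TTheory GRing.Theory Num.Theory.

(* d_j(n): ordered j-tuples of positive integers with product n
   (for n >= 1 every entry is <= n, so entries range over 'I_n.+1). *)
Definition dfun (j n : nat) : nat :=
  #|[set f : {ffun 'I_j -> 'I_n.+1} | [forall i, 0 < f i] && (\prod_(i < j) f i == n)]|.

Definition cfun (j n : nat) : nat :=
  #|[set f : {ffun 'I_j -> 'I_n.+1} | [forall i, 1 < f i] && (\prod_(i < j) f i == n)]|.

Fixpoint cfun_r (j r n : nat) : nat :=
  match r with
  | 0 => cfun j n
  | r'.+1 => \sum_(m <- divisors n) cfun_r j r' m
  end.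

Local Open Scope ring_scope.

Definition rising (x : rat) (i : nat) : rat := \prod_(l < i) (x + l%:R).

(* N-th partial sum (terms i = 0 .. N-1) of pFq(alphas; betas; z). *)
Definition hyperF_partial (alphas betas : seq rat) (z : rat) (N : nat) : rat :=
  \sum_(i < N)
    ((\prod_(al <- alphas) rising al i) * z ^+ i)
    / ((\prod_(be <- betas) rising be i) * (i`!)%:R).

(* Main.v *)
Require Import Defs.
From mathcomp Require Import all_boot all_order all_algebra.
From mathcomp Require Import zify ring.
Import Order.TTheory GRing.Theory Num.Theory.
Set Implicit Arguments. Unset Strict Implicit. Unset Printing Implicit Defensive.

Lemma card_set_sum (T : finType) (Q : pred T) :
  #|[set x | Q x]| = \sum_x (Q x : nat).
Proof.
rewrite -sum1_card big_mkcond /=; apply: eq_bigr => x _.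
by rewrite inE; case: (Q x).
Qed.

Definition ffcons (X : finType) m (x : X) (g : {ffun 'I_m -> X}) : {ffun 'I_m.+1 -> X} :=
  [ffun i => if unlift ord0 i is Some k then g k else x].

Lemma sum_ffunS (X : finType) m (F : {ffun 'I_m.+1 -> X} -> nat) :
  \sum_f F f = \sum_(x : X) \sum_(g : {ffun 'I_m -> X}) F (ffcons x g).
Proof.
rewrite pair_big /=.
rewrite (reindex (fun p : X * {ffun 'I_m -> X} => ffcons p.1 p.2)) //=.
exists (fun f : {ffun 'I_m.+1 -> X} => (f ord0, [ffun k => f (lift ord0 k)])).
  move=> [x g] _ /=; congr pair; first by rewrite ffunE unlift_none.
  by apply/ffunP => k; rewrite !ffunE liftK.
move=> f _; apply/ffunP => i; rewrite ffunE.
case: (unliftP ord0 i) => [k ->|->]; last by [].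
by rewrite ffunE.
Qed.

Fixpoint T (P : pred nat) (m d : nat) : nat :=
  match m with
  | 0 => (d == 1 : nat)
  | m'.+1 => \sum_(x <- divisors d | P x) T P m' (d %/ x)
  end.

Lemma sum_ord_divisors (P : pred nat) (G : nat -> nat) N d :
  0 < d <= N ->
  \sum_(x < N.+1 | P x && (x %| d)) G x = \sum_(x <- divisors d | P x) G x.
Proof.
move=> /andP [d0 dN].
rewrite -(big_mkord (fun x => P x && (x %| d)) G) -big_filter.
rewrite -(big_filter (divisors d)).
apply: perm_big; apply: uniq_perm.
- by apply: filter_uniq; apply: iota_uniq.
- by apply: filter_uniq; apply: divisors_uniq.
move=> x; rewrite !mem_filter mem_iota -dvdn_divisors //.
case: (P x) => //=; case Hx: (x %| d) => //=.
have := dvdn_leq d0 Hx; lia.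
Qed.

Lemma count_T (P : pred nat) (HP0 : ~~ P 0) m N d : 0 < d <= N ->
  #|[set f : {ffun 'I_m -> 'I_N.+1} | [forall i, P (f i)] && (\prod_(i < m) f i == d)]|
  = T P m d.
Proof.
elim: m d => [|m IH] d Hd.
  rewrite card_set_sum /=.
  transitivity (\sum_(f : {ffun 'I_0 -> 'I_N.+1}) (d == 1 : nat)).
    apply: eq_bigr => f _; rewrite big_ord0 eq_sym; congr nat_of_bool.
    by have -> : [forall i, P (f i)] by apply/forallP => [[]].
  by rewrite sum_nat_const card_ffun !card_ord expn0 mul1n.
rewrite card_set_sum sum_ffunS /=.
have Hc x (g : {ffun 'I_m -> 'I_N.+1}) :
  ([forall i, P (ffcons x g i)] && (\prod_(i < m.+1) ffcons x g i == d))
  = (P x && (x %| d)) && ([forall i, P (g i)] && (\prod_(i < m) g i == d %/ x)).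
  rewrite big_ord_recl ffunE unlift_none.
  under eq_bigr => i _ do rewrite ffunE liftK.
  have -> : [forall i, P (ffcons x g i)] = P x && [forall i, P (g i)].
    apply/forallP/andP => [H|[H1 /forallP H2] i].
      split; first by have := H ord0; rewrite ffunE unlift_none.
      by apply/forallP => i; have := H (lift ord0 i); rewrite ffunE liftK.
    by rewrite ffunE; case: (unlift ord0 i).
  case Px: (P x) => //=.
  have x0 : 0 < x by case: (posnP x) => // Hx; move: Px; rewrite Hx (negbTE HP0).
  case: [forall i, P (g i)]; rewrite ?andbF //=.
  apply/eqP/andP => [<-|[/dvdnP [q ->] /eqP ->]].
    by rewrite dvdn_mulr // mulKn.
  by rewrite mulnK // mulnC.
transitivity (\sum_(x <- divisors d | P x) T P m (d %/ x)); last by [].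
rewrite -(sum_ord_divisors P (fun x => T P m (d %/ x)) Hd) [RHS]big_mkcond /=.
apply: eq_bigr => x _.
under eq_bigr => g _ do rewrite Hc.
case: ifP => Hx; last by rewrite big1 // => g _; rewrite Hx.
case/andP: Hd => d0 dN.
case/andP: Hx => Px xd.
have x0 : 0 < x by case: (posnP x) => // Hx; move: Px; rewrite Hx (negbTE HP0).
rewrite -IH; last first.
  rewrite divn_gt0 // (dvdn_leq d0 xd) /=.
  exact: leq_trans (leq_div _ _) dN.
by rewrite card_set_sum.
Qed.

Lemma div_div d x : 0 < d -> x %| d -> d %/ (d %/ x) = x.
Proof.
move=> d0 /dvdnP [q Hq]; subst d.
have x0 : 0 < x by move: d0; rewrite muln_gt0 => /andP [].
have q0 : 0 < q by move: d0; rewrite muln_gt0 => /andP [].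
by rewrite mulnK // mulKn.
Qed.

Lemma mem_div_pos d x : 0 < d -> x \in divisors d -> 0 < x.
Proof.
move=> d0; rewrite -dvdn_divisors //; case: (posnP x) => // ->.
by rewrite dvd0n => /eqP E; rewrite E in d0.
Qed.

Lemma flip_div (R : Type) (idx : R) (op : Monoid.com_law idx) d (F : nat -> R) :
  0 < d -> \big[op/idx]_(x <- divisors d) F (d %/ x) = \big[op/idx]_(x <- divisors d) F x.
Proof.
move=> d0; rewrite -(big_map (fun x => d %/ x) xpredT F).
apply: perm_big; apply: uniq_perm; last 2 first.
- exact: divisors_uniq.
- move=> y; apply/mapP/idP => [[x]|yd].
    rewrite -!dvdn_divisors // => xd ->.
    by apply/dvdnP; exists x; rewrite mulnC divnK.
  exists (d %/ y); last by rewrite div_div // dvdn_divisors.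
  rewrite -dvdn_divisors // in yd *.
  rewrite -!dvdn_divisors // in yd *.
  by rewrite -{2}(divnK yd) dvdn_mulr.
rewrite map_inj_in_uniq; first exact: divisors_uniq.
move=> x y; rewrite -!dvdn_divisors // => xd yd E.
by rewrite -(div_div d0 xd) E div_div.
Qed.

Definition pos : pred nat := fun x => 0 < x.
Definition two : pred nat := fun x => 1 < x.

Lemma dfun_T m d : 0 < d -> dfun m d = T pos m d.
Proof. by move=> d0; rewrite /dfun -(@count_T pos _ m d d) // d0 leqnn. Qed.

Lemma cfun_T m d : 0 < d -> cfun m d = T two m d.
Proof. by move=> d0; rewrite /cfun -(@count_T two _ m d d) // d0 leqnn. Qed.

Lemma Tpos_S m d : 0 < d -> T pos m.+1 d = \sum_(x <- divisors d) T pos m x.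
Proof.
move=> d0 /=; rewrite -(flip_div _ _ d0) big_seq_cond [RHS]big_seq_cond.
apply: eq_bigl => x; case Hx: (x \in divisors d) => //=.
exact: mem_div_pos Hx.
Qed.

Lemma T2_S m d : 0 < d -> T two m.+1 d + T two m d = \sum_(x <- divisors d) T two m x.
Proof.
move=> d0.
have -> : T two m.+1 d = \sum_(x <- divisors d | two x) T two m (d %/ x) by [].
rewrite -(flip_div _ _ d0).
rewrite (bigD1_seq 1) ?divisors_uniq //; last by rewrite -dvdn_divisors.
rewrite divn1 addnC; congr (_ + _).
rewrite [LHS]big_seq_cond [RHS]big_seq_cond.
apply: eq_bigl => x; case Hx: (x \in divisors d) => //=.
by have := mem_div_pos d0 Hx; rewrite /two; case: x {Hx} => [|[|x]].
Qed.

Lemma dfun_S m d : 0 < d -> dfun m.+1 d = \sum_(x <- divisors d) dfun m x.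
Proof.
move=> d0; rewrite dfun_T // Tpos_S // big_seq [RHS]big_seq.
by apply: eq_bigr => x Hx; rewrite dfun_T //; apply: mem_div_pos Hx.
Qed.

Lemma cfun_S m d : 0 < d -> cfun m.+1 d + cfun m d = \sum_(x <- divisors d) cfun m x.
Proof.
move=> d0; rewrite !cfun_T // T2_S // big_seq [RHS]big_seq.
by apply: eq_bigr => x Hx; rewrite cfun_T //; apply: mem_div_pos Hx.
Qed.

Local Open Scope ring_scope.

Lemma claimB j r d : (0 < d)%N ->
  (cfun_r j.+1 r d)%:R = (cfun_r j r.+1 d)%:R - (cfun_r j r d)%:R :> rat.
Proof.
elim: r d => [|r IH] d d0.
  by rewrite /= -cfun_S // natrD addrK.
rewrite /= !natr_sum -sumrB big_seq [RHS]big_seq.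
apply: eq_bigr => x Hx; rewrite IH //; exact: mem_div_pos Hx.
Qed.

Lemma claimC r d : (0 < d)%N -> cfun_r 0 r d = dfun r d.
Proof.
elim: r d => [|r IH] d d0.
  by rewrite /= cfun_T // dfun_T.
rewrite /= dfun_S // big_seq [RHS]big_seq.
apply: eq_bigr => x Hx; rewrite IH //; exact: mem_div_pos Hx.
Qed.

Lemma claimA j r d : (0 < d)%N ->
  (cfun_r j r d)%:R = \sum_(i < j.+1) (-1) ^+ i * ('C(j, i))%:R * (dfun (j + r - i) d)%:R :> rat.
Proof.
move=> d0; elim: j r => [|j IH] r.
  by rewrite big_ord1 /= claimC // expr0 mul1r bin0 mul1r subn0 add0n.
rewrite claimB // !IH.
have b0 (i : nat) : bump 0 i = i.+1 by rewrite /bump leq0n add1n.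
rewrite [in RHS]big_ord_recl [in X in X - _ = _]big_ord_recl /=.
rewrite !expr0 !mul1r !bin0 !mul1r !subn0 addnS addSn -addrA; congr (_ + _).
under [in RHS]eq_bigr => i _ do rewrite b0 binS natrD mulrDr mulrDl.
rewrite big_split /=; congr (_ + _).
  rewrite [in RHS]big_ord_recr /= bin_small // mulr0 mul0r addr0.
  by apply: eq_bigr => i _; rewrite b0 subSS.
rewrite -sumrN; apply: eq_bigr => i _.
by rewrite subSS exprS mulN1r !mulNr.
Qed.

Local Close Scope ring_scope.

Section Fact.
Variables (t : nat) (p : 'I_t -> nat).
Hypothesis pr : forall k, prime (p k).
Hypothesis pinj : injective p.

Definition Nf (e : 'I_t -> nat) := \prod_(k < t) p k ^ e k.

Lemma Nf_gt0 e : 0 < Nf e.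
Proof. by apply: prodn_gt0 => k; rewrite expn_gt0 prime_gt0. Qed.

Lemma logn_Nf q e : logn q (Nf e) = \sum_(k < t) (q == p k) * e k.
Proof.
case pq: (prime q); last first.
  rewrite lognE pq /= big1 // => k _.
  by case: eqP => // E; have := pr k; rewrite -E pq.
rewrite /Nf.
suff [] : 0 < \prod_(k < t) p k ^ e k /\ logn q (\prod_(k < t) p k ^ e k) = \sum_(k < t) (q == p k) * e k by [].
apply: (big_rec2 (fun x y => 0 < x /\ logn q x = y)); first by split; [|rewrite logn1].
move=> k x y _ [x0 <-]; split; first by rewrite muln_gt0 x0 expn_gt0 prime_gt0.
rewrite /= lognM ?expn_gt0 ?(prime_gt0 (pr k)) //.
have -> : logn q (p k ^ e k) = e k * (q == p k) by rewrite lognX logn_prime.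
by rewrite mulnC.
Qed.

Lemma sum_sel k0 (f : 'I_t -> nat) : \sum_(k < t) (p k0 == p k) * f k = f k0.
Proof.
rewrite (bigD1 k0) //= eqxx mul1n big1 ?addn0 // => k /negbTE kk.
case: eqP => [/pinj E|]; last by [].
by rewrite E eqxx in kk.
Qed.

Lemma logn_Nf_p k e : logn (p k) (Nf e) = e k.
Proof. by rewrite logn_Nf sum_sel. Qed.

Lemma Nf_inj e1 e2 : Nf e1 = Nf e2 -> forall k, e1 k = e2 k.
Proof. by move=> E k; rewrite -logn_Nf_p E logn_Nf_p. Qed.

Lemma Nf_dvd (b a : 'I_t -> nat) : (forall k, b k <= a k) -> Nf b %| Nf a.
Proof.
move=> ba.
have -> : Nf a = Nf b * Nf (fun k => a k - b k).
  rewrite /Nf -big_split /=; apply: eq_bigr => k _.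
  by rewrite -expnD subnKC.
exact: dvdn_mulr.
Qed.

Lemma sum_div_Nf (F : nat -> nat) (a : 'I_t -> nat) B : (forall k, a k <= B) ->
  \sum_(x <- divisors (Nf a)) F x
  = \sum_(b : {ffun 'I_t -> 'I_B.+1} | [forall k, b k <= a k]) F (Nf (fun k => b k)).
Proof.
move=> aB.
rewrite [RHS]/= -[RHS]big_filter -[RHS](big_map (fun b : {ffun 'I_t -> 'I_B.+1} => Nf (fun k => b k)) xpredT F).
apply: perm_big; apply: uniq_perm; first exact: divisors_uniq.
  rewrite map_inj_in_uniq; first by apply: filter_uniq; apply: index_enum_uniq.
  move=> b1 b2 _ _ E; apply/ffunP => k; apply: val_inj; exact: Nf_inj E k.
move=> x; rewrite -dvdn_divisors ?Nf_gt0 //; apply/idP/mapP => [xd|[b]].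
  have x0 : 0 < x by case: (posnP x) xd => // ->; rewrite dvd0n => /eqP E; have := Nf_gt0 a; rewrite E.
  have lb k : logn (p k) x <= a k.
    by rewrite -(logn_Nf_p k a); apply: dvdn_leq_log => //; apply: Nf_gt0.
  exists [ffun k => inord (logn (p k) x)].
    rewrite mem_filter mem_index_enum andbT; apply/forallP => k.
    by rewrite ffunE inordK // ltnS (leq_trans (lb k)).
  apply: eqn_from_log => //; first exact: Nf_gt0.
  move=> q; rewrite logn_Nf.
  under eq_bigr => k _ do rewrite ffunE inordK ?ltnS ?(leq_trans (lb k)) //.
  case: (boolP [exists k, q == p k]) => [/existsP [k /eqP ->]|].
    by rewrite sum_sel.
  rewrite negb_exists => /forallP nq.
  rewrite big1; last by move=> k _; rewrite (negbTE (nq k)).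
  apply/eqP; rewrite -leqn0.
  have := dvdn_leq_log q (Nf_gt0 a) xd; rewrite logn_Nf big1 //.
  by move=> k _; rewrite (negbTE (nq k)).
rewrite mem_filter mem_index_enum andbT => /forallP ba ->.
exact: Nf_dvd.
Qed.

Lemma hockey m a : \sum_(c < a.+1) 'C(c + m - 1, c) = 'C(a + m, a).
Proof.
elim: a => [|a IH]; first by rewrite big_ord1 /= !bin0.
rewrite big_ord_recr /= IH.
have -> : a.+1 + m - 1 = a + m by lia.
by rewrite addSn binS addnC.
Qed.

Lemma dfun_Nf m (a : 'I_t -> nat) :
  dfun m (Nf a) = \prod_(k < t) 'C(a k + m - 1, a k).
Proof.
elim: m a => [|m IH] a.
  rewrite dfun_T ?Nf_gt0 //=.
  case: (boolP [forall k, a k == 0]) => [/forallP a0|].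
    have -> : Nf a = 1 by rewrite /Nf big1 // => k _; rewrite (eqP (a0 k)).
    by rewrite big1 // => k _; rewrite (eqP (a0 k)) bin0.
  rewrite negb_forall => /existsP [k ak].
  rewrite (bigD1 k) //= bin_small ?mul0n; last by move: ak; rewrite addn0; case: (a k) => // n _; rewrite subn1.
  case: eqP => // E.
  by move: ak; rewrite -(logn_Nf_p k a) E logn1.
rewrite dfun_S ?Nf_gt0 //.
rewrite (sum_div_Nf _ (B := \sum_(k < t) a k)); last first.
  by move=> k; rewrite (bigD1 k) //= leq_addr.
under eq_bigr => b _ do rewrite IH.
set B := \sum_(k < t) a k.
transitivity (\prod_(k < t) \sum_(c : 'I_B.+1 | c <= a k) 'C(c + m - 1, c)); last first.
  apply: eq_bigr => k _.
  have aB : (a k).+1 <= B.+1 by rewrite ltnS /B (bigD1 k) //= leq_addr.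
  rewrite (eq_bigl (fun c : 'I_B.+1 => c < (a k).+1)); last by move=> c; rewrite ltnS.
  rewrite -(big_ord_widen _ (fun c => 'C(c + m - 1, c)) aB) hockey.
  by rewrite addnS subn1.
rewrite bigA_distr_big_dep; apply: eq_bigl => b.
by apply/forallP/familyP.
Qed.
End Fact.

Lemma ffactD L i a : L ^_ (i + a) = L ^_ i * (L - i) ^_ a.
Proof.
elim: a => [|a IH]; first by rewrite addn0 ffactn0 muln1.
by rewrite addnS !ffactnSr IH subnDA mulnA.
Qed.

Lemma binid L a i : 'C(L - i, a) * 'C(L, i) = 'C(L - a, i) * 'C(L, a).
Proof.
apply/eqP; rewrite -(eqn_pmul2r (fact_gt0 a)) -(eqn_pmul2r (fact_gt0 i)).
have -> : 'C(L - i, a) * 'C(L, i) * a`! * i`! = ('C(L - i, a) * a`!) * ('C(L, i) * i`!) by ring.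
have -> : 'C(L - a, i) * 'C(L, a) * a`! * i`! = ('C(L - a, i) * i`!) * ('C(L, a) * a`!) by ring.
by rewrite !bin_ffact mulnC -ffactD [X in _ == X]mulnC -ffactD addnC.
Qed.

Local Open Scope ring_scope.

Lemma frac_eq (x y z w : nat) : y <> 0%N -> w <> 0%N -> (x * w = z * y)%N ->
  x%:R / y%:R = z%:R / w%:R :> rat.
Proof.
move=> y0 w0 E; apply/eqP; rewrite eqr_div ?pnatr_eq0; try by apply/eqP.
by rewrite -!natrM E.
Qed.


Lemma rising_neg (x i : nat) : rising (- x%:R) i = (-1) ^+ i * (x ^_ i)%:R.
Proof.
elim: i => [|i IH]; first by rewrite /rising big_ord0 expr0 mul1r ffactn0.
rewrite /rising big_ord_recr /= -/(rising _ _) IH ffactnSr.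
case: (leqP i x) => ix.
  rewrite natrM natrB // exprS; ring.
by rewrite ffact_small // mul0n !(mulr0, mul0r).
Qed.

Lemma rising_pos (y i : nat) : (0 < y)%N -> rising y%:R i = ((y + i - 1) ^_ i)%:R.
Proof.
move=> y0; elim: i => [|i IH]; first by rewrite /rising big_ord0 ffactn0.
rewrite /rising big_ord_recr /= -/(rising _ _) IH.
have -> : (y + i.+1 - 1 = (y + i - 1).+1)%N by lia.
rewrite ffactnS /= -natrD natrM mulrC; congr (_ * _); congr (_%:R); lia.
Qed.

Local Open Scope ring_scope.

Lemma prod_nseq (R : comPzRingType) (f : rat -> R) t x :
  \prod_(y <- nseq t x) f y = f x ^+ t.
Proof. by elim: t => [|t IH]; rewrite ?big_nil ?expr0 // big_cons IH exprS. Qed.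

Lemma prod_enum (R : comPzRingType) t (f : 'I_t -> R) :
  \prod_(k <- enum 'I_t) f k = \prod_(k < t) f k.
Proof. by rewrite big_enum. Qed.

Lemma trunc_sum (F : nat -> rat) j N : (j < N)%N -> (forall i, (j < i)%N -> F i = 0) ->
  \sum_(i < N) F i = \sum_(i < j.+1) F i.
Proof.
move=> jN Fz; rewrite (big_ord_widen _ _ jN) [RHS]big_mkcond /=.
by apply: eq_bigr => i _; case: ifP => // /negbT; rewrite -leqNgt => /Fz.
Qed.

Lemma hyper_trunc al be z j N : (j < N)%N ->
  (forall i, (j < i)%N -> \prod_(x <- al) rising x i = 0) ->
  hyperF_partial al be z N = \sum_(i < j.+1)
    ((\prod_(x <- al) rising x i) * z ^+ i) / ((\prod_(x <- be) rising x i) * (i`!)%:R).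
Proof.
move=> jN H; rewrite /hyperF_partial.
rewrite (@trunc_sum (fun i => ((\prod_(x <- al) rising x i) * z ^+ i) / ((\prod_(x <- be) rising x i) * (i`!)%:R)) j N jN) //.
by move=> i ji; rewrite H // !mul0r.
Qed.

Lemma hyp1 j r t (a : 'I_t -> nat) N : (0 < j)%N -> (forall k, 0 < a k)%N -> (j < N)%N ->
      \sum_(i < j.+1) (-1) ^+ i * ('C(j, i))%:R
        * (('C(j + r - 1, i))%:R ^+ t / \prod_(k < t) ('C(a k + j + r - 1, i))%:R)
      = hyperF_partial
          (nseq t (1 - (j + r)%:R) ++ [:: - (j%:R)])
          [seq 1 - (a k + j + r)%:R | k <- enum 'I_t] 1 N.
Proof.
move=> j0 a0 jN; rewrite (@hyper_trunc _ _ _ j N jN); last first.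
  move=> i ji; rewrite big_cat /= big_cons big_nil mulr1 rising_neg ffact_small //.
  by rewrite mulr0 mulr0.
apply: eq_bigr => i _.
have E1 : 1 - (j + r)%:R = - (j + r - 1)%:R :> rat by rewrite natrB ?addn_gt0 ?j0 //; ring.
have E2 k : 1 - (a k + j + r)%:R = - (a k + j + r - 1)%:R :> rat.
  by rewrite natrB ?addn_gt0 ?a0 //; ring.
rewrite big_cat /= big_cons big_nil mulr1 prod_nseq big_map prod_enum E1.
rewrite /=.
have D : \prod_(k < t) rising (1 - (a k + j + r)%:R) i = \prod_(k < t) ((-1) ^+ i) * \prod_(k<t) ('C(a k + j + r - 1, i))%:R * \prod_(k < t) (i`!)%:R.
  rewrite -!big_split /=; apply: eq_bigr => k _.
  by rewrite E2 rising_neg -bin_ffact natrM mulrA.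
rewrite D !prodr_const card_ord !rising_neg -!bin_ffact !natrM expr1n mulr1.
have f0 : (i`!)%:R != 0 :> rat by rewrite pnatr_eq0 -lt0n fact_gt0.
have s0 : (-1) ^+ i != 0 :> rat by rewrite signr_eq0.
have P0 : \prod_(k < t) ('C(a k + j + r - 1, i))%:R != 0 :> rat.
  rewrite -natr_prod pnatr_eq0 -lt0n; apply: prodn_gt0 => k; rewrite bin_gt0.
  have := a0 k; have := ltn_ord i; lia.
rewrite !exprMn.
have st0 := expf_neq0 t s0; have ft0 := expf_neq0 t f0.
move: st0 ft0 s0 f0 P0.
set st := (-1) ^+ i ^+ t. set ct := 'C(j + r - 1, i)%:R ^+ t. set ft := i`!%:R ^+ t.
set s := (-1) ^+ i. set f := i`!%:R. set P := \prod_(k < t) _. set cj := 'C(j, i)%:R.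
move=> st0 ft0 s0 f0 P0.
by field; rewrite st0 ft0 f0 P0.
Qed.

Lemma hyp2 j r t (a : 'I_t -> nat) N : (0 < r)%N -> (j < N)%N ->
          \sum_(i < j.+1) (-1) ^+ (j - i) * ('C(j, i))%:R
            * ((\prod_(k < t) ('C(a k + i + r - 1, i))%:R) / ('C(i + r - 1, i))%:R ^+ t)
          = (-1) ^+ j * hyperF_partial
              ([seq (a k + r)%:R | k <- enum 'I_t] ++ [:: - (j%:R)])
              (nseq t (r%:R)) 1 N.
Proof.
move=> r0 jN; rewrite (@hyper_trunc _ _ _ j N jN); last first.
  move=> i ji; rewrite big_cat /= big_cons big_nil mulr1 rising_neg ffact_small //.
  by rewrite mulr0 mulr0.
rewrite mulr_sumr; apply: eq_bigr => i _.
have ij : (i <= j)%N by rewrite -ltnS.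
rewrite big_cat /= big_cons big_nil mulr1 prod_nseq big_map prod_enum /= expr1n mulr1.
have D : \prod_(k < t) rising (a k + r)%:R i = \prod_(k < t) ('C(a k + i + r - 1, i))%:R * \prod_(k < t) (i`!)%:R.
  rewrite -big_split; apply: eq_bigr => k _.
  rewrite rising_pos ?addn_gt0 ?r0 ?orbT // -bin_ffact natrM.
  by rewrite addnAC.
rewrite D prodr_const card_ord rising_pos // -bin_ffact natrM rising_neg -bin_ffact natrM.
rewrite [(r + i)%N]addnC.
have sg : (-1) ^+ (j - i) = (-1) ^+ j * (-1) ^+ i :> rat.
  have -> : (-1) ^+ j = (-1) ^+ (j - i) * (-1) ^+ i :> rat by rewrite -exprD subnK.
  by rewrite -mulrA -exprD addnn -mul2n exprM sqrrN !expr1n mulr1.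
rewrite sg !exprMn.
have f0 : (i`!)%:R != 0 :> rat by rewrite pnatr_eq0 -lt0n fact_gt0.
have s0 : (-1) ^+ i != 0 :> rat by rewrite signr_eq0.
have C0 : ('C(i + r - 1, i))%:R != 0 :> rat.
  rewrite pnatr_eq0 -lt0n bin_gt0; lia.
have ct0 := expf_neq0 t C0; have ft0 := expf_neq0 t f0.
move: ct0 ft0 s0 f0.
set ct := 'C(i + r - 1, i)%:R ^+ t. set ft := i`!%:R ^+ t.
set s := (-1) ^+ i. set f := i`!%:R. set P := \prod_(k < t) _. set cj := 'C(j, i)%:R.
set sj := (-1) ^+ j.
move=> ct0 ft0 s0 f0.
by field; rewrite ct0 ft0 f0.
Qed.

Local Open Scope ring_scope.

Lemma part1 j r t (p a : 'I_t -> nat) :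
  (forall k, prime (p k)) -> injective p -> (0 < j)%N -> (forall k, (0 < a k)%N) ->
  ((cfun_r j r (Nf p a))%:R / (dfun (j + r) (Nf p a))%:R : rat)
    = \sum_(i < j.+1) (-1) ^+ i * ('C(j, i))%:R
        * (('C(j + r - 1, i))%:R ^+ t / \prod_(k < t) ('C(a k + j + r - 1, i))%:R).
Proof.
move=> pr pinj j0 a0.
rewrite claimA ?Nf_gt0 // mulr_suml; apply: eq_bigr => i _; rewrite -[LHS]mulrA; congr (_ * _).
have ij : (i <= j)%N by rewrite -ltnS.
rewrite !dfun_Nf //.
have E : ('C(j + r - 1, i) ^ t = \prod_(k < t) 'C(j + r - 1, i))%N.
  by rewrite prod_nat_const card_ord.
rewrite -natrX E -natr_prod; apply: frac_eq.
- apply/eqP; rewrite -lt0n; apply: prodn_gt0 => k; rewrite bin_gt0; have := a0 k; lia.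
- apply/eqP; rewrite -lt0n; apply: prodn_gt0 => k; rewrite bin_gt0; have := a0 k; lia.
rewrite -!big_split /=; apply: eq_bigr => k _.
have := binid (a k + j + r - 1) (a k) i.
have e1 : (a k + (j + r - i) - 1 = a k + j + r - 1 - i)%N by have := a0 k; lia.
have e2 : (a k + j + r - 1 - a k = j + r - 1)%N by have := a0 k; lia.
have e3 : (a k + (j + r) - 1 = a k + j + r - 1)%N by lia.
by rewrite e1 e2 e3.
Qed.

Lemma part3 j r t (p a : 'I_t -> nat) :
  (forall k, prime (p k)) -> injective p -> (0 < r)%N -> (forall k, (0 < a k)%N) ->
      ((cfun_r j r (Nf p a))%:R / (dfun r (Nf p a))%:R : rat)
        = \sum_(i < j.+1) (-1) ^+ (j - i) * ('C(j, i))%:R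
            * ((\prod_(k < t) ('C(a k + i + r - 1, i))%:R) / ('C(i + r - 1, i))%:R ^+ t).
Proof.
move=> pr pinj r0 a0.
rewrite claimA ?Nf_gt0 // mulr_suml [RHS](reindex_inj rev_ord_inj) /=.
apply: eq_bigr => i _.
have ij : (i <= j)%N by rewrite -ltnS.
rewrite subSS subKn // bin_sub // -[LHS]mulrA; congr (_ * _).
rewrite !dfun_Nf //.
have E : ('C(j - i + r - 1, j - i) ^ t = \prod_(k < t) 'C(j - i + r - 1, j - i))%N.
  by rewrite prod_nat_const card_ord.
rewrite -natrX E -!natr_prod; apply: frac_eq.
- apply/eqP; rewrite -lt0n; apply: prodn_gt0 => k; rewrite bin_gt0; have := a0 k; lia.
- apply/eqP; rewrite -lt0n; apply: prodn_gt0 => k; rewrite bin_gt0; lia.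
rewrite -!big_split /=; apply: eq_bigr => k _.
have := binid (a k + (j - i) + r - 1) (a k) (j - i).
have e1 : (a k + (j - i) + r - 1 - (j - i) = a k + r - 1)%N by have := a0 k; lia.
have e2 : (a k + (j - i) + r - 1 - a k = j - i + r - 1)%N by lia.
have e3 : (a k + (j + r - i) - 1 = a k + (j - i) + r - 1)%N by lia.
rewrite e1 e2 e3 => H.
by rewrite [LHS]mulnC -H mulnC.
Qed.

Theorem theorem2 (j r t : nat) (p a : 'I_t -> nat) (n : nat) :
  (0 < j)%N -> (0 < t)%N ->
  (forall k, prime (p k)) -> injective p ->
  (forall k, (0 < a k)%N) ->
  n = (\prod_(k < t) p k ^ a k)%N ->
  ((cfun_r j r n)%:R / (dfun (j + r) n)%:R : rat)
    = \sum_(i < j.+1) (-1) ^+ i * ('C(j, i))%:R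
        * (('C(j + r - 1, i))%:R ^+ t / \prod_(k < t) ('C(a k + j + r - 1, i))%:R)
  /\ (forall N, (j < N)%N ->
      \sum_(i < j.+1) (-1) ^+ i * ('C(j, i))%:R
        * (('C(j + r - 1, i))%:R ^+ t / \prod_(k < t) ('C(a k + j + r - 1, i))%:R)
      = hyperF_partial
          (nseq t (1 - (j + r)%:R) ++ [:: - (j%:R)])
          [seq 1 - (a k + j + r)%:R | k <- enum 'I_t] 1 N)
  /\ ((0 < r)%N ->
      ((cfun_r j r n)%:R / (dfun r n)%:R : rat)
        = \sum_(i < j.+1) (-1) ^+ (j - i) * ('C(j, i))%:R
            * ((\prod_(k < t) ('C(a k + i + r - 1, i))%:R) / ('C(i + r - 1, i))%:R ^+ t)
      /\ (forall N, (j < N)%N ->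
          \sum_(i < j.+1) (-1) ^+ (j - i) * ('C(j, i))%:R
            * ((\prod_(k < t) ('C(a k + i + r - 1, i))%:R) / ('C(i + r - 1, i))%:R ^+ t)
          = (-1) ^+ j * hyperF_partial
              ([seq (a k + r)%:R | k <- enum 'I_t] ++ [:: - (j%:R)])
              (nseq t (r%:R)) 1 N)).
Proof.
move=> j0 t0 pr pinj a0 ->.
have -> : (\prod_(k < t) p k ^ a k)%N = Nf p a by [].
split; first exact: part1.
split; first by move=> N jN; apply: hyp1.
move=> r0; split; first exact: part3.
by move=> N jN; apply: hyp2.
Qed.
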